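(* Let $H$ be a finite-dimensional semisimple Hopf algebra over an algebraically closed field $k$ of characteristic $0$. The following are equivalent: (i) there exists a $1$-dimensional representation of $H$ whose character is faithful; (ii) $R(H)=k\langle\sigma\rangle$, the span of the powers of some grouplike element $\sigma$ of $H^*$; (iii) $H\cong(k\langle\sigma\rangle)^*$, i.e. $H^*$ is the group algebra of the cyclic group generated by some grouplike element $\sigma$ of $H^*$.
   Context: A character $\chi_V$ of a finite-dimensional left $H$-module $V$ is faithful if $\mathrm{LKer}_V=k1$, where $\mathrm{LKer}_V=\{h\in H\mid\sum h_1\otimes h_2\cdot v=h\otimes v\ \forall v\in V\}$. $R(H)\subset H^*$ is the span of the irreducible characters of $H$. *)

(* Defs.v *)
(* Finite-dimensional Hopf algebras are given in coordinates:
   H has a fixed basis e_0, ..., e_(n-1); an element of H is the row vector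
   of its coordinates ('rV[k]_n), and an element f of the dual H^* is the
   row vector (f(e_0), ..., f(e_(n-1))). *)
From mathcomp Require Import all_boot all_algebra.
Set Implicit Arguments. Unset Strict Implicit. Unset Printing Implicit Defensive.
Import GRing.Theory.
Local Open Scope ring_scope.

Record hopf_str (k : fieldType) (n : nat) := HopfStr {
  hmul : 'I_n -> 'I_n -> 'I_n -> k;  (* e_i e_j = \sum_t hmul i j t e_t *)
  hone : 'I_n -> k;                  (* 1 = \sum_i hone i e_i *)
  hcop : 'I_n -> 'I_n -> 'I_n -> k;  (* Delta e_i = \sum_(a,b) hcop i a b e_a (x) e_b *)
  hcou : 'I_n -> k;
  hant : 'I_n -> 'I_n -> k           (* S e_i = \sum_j hant i j e_j *)
}.

Record is_hopf (k : fieldType) (n : nat) (A : hopf_str k n) : Prop := {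
  hmulA : forall i j l t,
    \sum_p hmul A i j p * hmul A p l t = \sum_p hmul A j l p * hmul A i p t;
  hmul1x : forall j t, \sum_i hone A i * hmul A i j t = (j == t)%:R;
  hmulx1 : forall i t, \sum_j hone A j * hmul A i j t = (i == t)%:R;
  hcopA : forall i a b c,
    \sum_j hcop A i j c * hcop A j a b = \sum_j hcop A i a j * hcop A j b c;
  hcou_l : forall i l, \sum_j hcou A j * hcop A i j l = (i == l)%:R;
  hcou_r : forall i j, \sum_l hcop A i j l * hcou A l = (i == j)%:R;
  hcop_mul : forall i j a b,
    \sum_l hmul A i j l * hcop A l a b =
    \sum_p \sum_q \sum_r \sum_s
       hcop A i p q * hcop A j r s * hmul A p r a * hmul A q s b;
  hcop_one : forall a b, \sum_l hone A l * hcop A l a b = hone A a * hone A b;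
  hcou_mul : forall i j, \sum_l hmul A i j l * hcou A l = hcou A i * hcou A j;
  hcou_one : \sum_l hone A l * hcou A l = 1;
  hant_l : forall i t,
    \sum_p \sum_q hcop A i p q * (\sum_r hant A p r * hmul A r q t)
    = hcou A i * hone A t;                       (* S(h1) h2 = eps(h) 1 *)
  hant_r : forall i t,
    \sum_p \sum_q hcop A i p q * (\sum_r hant A q r * hmul A p r t)
    = hcou A i * hone A t                        (* h1 S(h2) = eps(h) 1 *)
}.

Definition hmulv (k : fieldType) (n : nat) (A : hopf_str k n) (x y : 'rV[k]_n)
  : 'rV[k]_n := \row_t \sum_i \sum_j x 0 i * y 0 j * hmul A i j t.
Definition honev (k : fieldType) (n : nat) (A : hopf_str k n) : 'rV[k]_n :=
  \row_i hone A i.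

(* H is semisimple: every left ideal of H (a subspace, given as a row space,
   stable under left multiplication) has a complementary left ideal. *)
Definition left_ideal (k : fieldType) (n : nat) (A : hopf_str k n) (I : 'M[k]_n)
  : Prop := forall x v : 'rV[k]_n, (v <= I)%MS -> (hmulv A x v <= I)%MS.
Definition semisimple (k : fieldType) (n : nat) (A : hopf_str k n) : Prop :=
  forall I : 'M[k]_n, left_ideal A I ->
    exists J : 'M[k]_n, [/\ left_ideal A J, (I :&: J <= (0 : 'M[k]_n))%MS
                         & (1%:M <= I + J)%MS].

(* A d-dimensional left H-module: V = column vectors 'cV_d, e_i acts by the
   matrix r i; h acts by \sum_i h_i *: r i.  Algebra map conditions: *)
Definition rep_of (k : fieldType) (n d : nat) (A : hopf_str k n)
  (r : 'I_n -> 'M[k]_d) : Prop :=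
  (forall i j, r i *m r j = \sum_l hmul A i j l *: r l) /\
  \sum_l hone A l *: r l = 1%:M.

Definition charv (k : fieldType) (n d : nat) (r : 'I_n -> 'M[k]_d) : 'rV[k]_n :=
  \row_i \tr (r i).

(* Irreducible module: nonzero, and every submodule (a subspace of 'cV_d,
   encoded as the row space of U whose rows are the transposed vectors) is 0
   or everything. *)
Definition irr_rep (k : fieldType) (n d : nat) (A : hopf_str k n)
  (r : 'I_n -> 'M[k]_d) : Prop :=
  [/\ rep_of A r, (0 < d)%N &
     forall U : 'M[k]_d, (forall i, (U *m (r i)^T <= U)%MS) ->
       U = 0 \/ row_full U].

Definition inRH (k : fieldType) (n : nat) (A : hopf_str k n) (f : 'rV[k]_n)
  : Prop :=
  exists (m : nat) (c : 'I_m -> k) (d : 'I_m -> nat)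
         (r : forall j : 'I_m, 'I_n -> 'M[k]_(d j)),
    (forall j, irr_rep A (r j)) /\ f = \sum_j c j *: charv (r j).

(* Algebra structure of H^*: convolution (f g)(h) = \sum f(h1) g(h2),
   unit eps. *)
Definition dmul (k : fieldType) (n : nat) (A : hopf_str k n) (f g : 'rV[k]_n)
  : 'rV[k]_n := \row_i \sum_a \sum_b hcop A i a b * f 0 a * g 0 b.
Definition deps (k : fieldType) (n : nat) (A : hopf_str k n) : 'rV[k]_n :=
  \row_i hcou A i.
Definition dpow (k : fieldType) (n : nat) (A : hopf_str k n) (s : 'rV[k]_n)
  (m : nat) : 'rV[k]_n := iter m (fun g => dmul A g s) (deps A).

(* Grouplike element of H^*: Delta_{H^*}(s) = s (x) s and eps_{H^*}(s) = 1,
   where Delta_{H^*}(s)(x (x) y) = s(xy) and eps_{H^*}(s) = s(1). *)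
Definition grouplike_dual (k : fieldType) (n : nat) (A : hopf_str k n)
  (s : 'rV[k]_n) : Prop :=
  (forall i j, \sum_l hmul A i j l * s 0 l = s 0 i * s 0 j) /\
  \sum_l hone A l * s 0 l = 1.

Definition in_span_pow (k : fieldType) (n : nat) (A : hopf_str k n)
  (s f : 'rV[k]_n) : Prop :=
  exists (m : nat) (c : 'I_m -> k), f = \sum_(j < m) c j *: dpow A s j.

(* LKer_V = { h | \sum h1 (x) h2.v = h (x) v for all v in V };
   H (x) V is identified with 'M_(n,d) (coefficient of e_j (x) (a-th basis vector)). *)
Definition in_LKer (k : fieldType) (n d : nat) (A : hopf_str k n)
  (r : 'I_n -> 'M[k]_d) (h : 'rV[k]_n) : Prop :=
  forall (v : 'cV[k]_d) (j : 'I_n) (a : 'I_d),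
    \sum_i h 0 i * (\sum_l hcop A i j l * (r l *m v) a 0) = h 0 j * v a 0.

(* The character of V is faithful: LKer_V = k 1. *)
Definition faithful_char (k : fieldType) (n d : nat) (A : hopf_str k n)
  (r : 'I_n -> 'M[k]_d) : Prop :=
  forall h : 'rV[k]_n, in_LKer A r h <-> exists c : k, h = c *: honev A.

(* Main.v *)
Require Import Defs.
From mathcomp Require Import all_boot all_algebra.
From mathcomp Require Import ring.
Set Implicit Arguments. Unset Strict Implicit. Unset Printing Implicit Defensive.
Import GRing.Theory.
Local Open Scope ring_scope.

Section Basics.
Variables (k : fieldType) (n : nat) (A : hopf_str k n).
Hypothesis HA : is_hopf A.

Definition Lm (x : 'rV[k]_n) : 'M[k]_n := \matrix_(j, t) \sum_i x 0 i * hmul A i j t.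
Definition Rmu (v : 'rV[k]_n) : 'M[k]_n := \matrix_(i, t) \sum_j v 0 j * hmul A i j t.

Lemma hmulv_Lm x v : hmulv A x v = v *m Lm x.
Proof.
apply/rowP => t; rewrite !mxE exchange_big; apply: eq_bigr => j _.
rewrite mxE big_distrr; apply: eq_bigr => i _ /=; rewrite mulrCA mulrA.
by [].
Qed.

Lemma hmulv_Rmu x v : hmulv A x v = x *m Rmu v.
Proof.
apply/rowP => t; rewrite !mxE; apply: eq_bigr => i _.
rewrite mxE big_distrr; apply: eq_bigr => j _ /=; rewrite mulrA.
by [].
Qed.

Lemma Lm_mul x y : Lm (hmulv A x y) = Lm y *m Lm x.
Proof.
apply/matrixP => j t; rewrite !mxE.
transitivity (\sum_i \sum_j' x 0 i * y 0 j' * \sum_p hmul A i j' p * hmul A p j t).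
  rewrite (eq_bigr (fun p => \sum_i \sum_j' x 0 i * y 0 j' * (hmul A i j' p * hmul A p j t))).
    rewrite exchange_big; apply: eq_bigr => i _; rewrite exchange_big.
    by apply: eq_bigr => j' _; rewrite big_distrr.
  move=> p _; rewrite mxE big_distrl; apply: eq_bigr => i _.
  by rewrite big_distrl; apply: eq_bigr => j' _ /=; rewrite mulrA.
symmetry.
transitivity (\sum_q \sum_i \sum_j' x 0 i * y 0 j' * (hmul A j' j q * hmul A i q t)).
  apply: eq_bigr => q _; rewrite !mxE big_distrlr exchange_big /=.
  apply: eq_bigr => i _; apply: eq_bigr => j' _.
  ring.
rewrite exchange_big; apply: eq_bigr => i _; rewrite exchange_big.
by apply: eq_bigr => j' _; rewrite -big_distrr (hmulA HA).
Qed.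

Lemma hmulv_assoc x y z : hmulv A (hmulv A x y) z = hmulv A x (hmulv A y z).
Proof. by rewrite [LHS]hmulv_Lm Lm_mul [hmulv A y z]hmulv_Lm hmulv_Lm mulmxA. Qed.

Lemma Lm_one : Lm (honev A) = 1%:M.
Proof.
apply/matrixP => j t; rewrite !mxE -(hmul1x HA j t).
by apply: eq_bigr => i _; rewrite mxE.
Qed.

Lemma Rmu_one : Rmu (honev A) = 1%:M.
Proof.
apply/matrixP => i t; rewrite !mxE -(hmulx1 HA i t).
by apply: eq_bigr => j _; rewrite mxE.
Qed.

Lemma hmul1v v : hmulv A (honev A) v = v.
Proof. by rewrite hmulv_Lm Lm_one mulmx1. Qed.

Lemma hmulv1 v : hmulv A v (honev A) = v.
Proof. by rewrite hmulv_Rmu Rmu_one mulmx1. Qed.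

Lemma sum_delta (f : 'I_n -> k) i :
  \sum_i' (delta_mx 0 i : 'rV[k]_n) 0 i' * f i' = f i.
Proof.
rewrite (bigD1 i) //= big1 ?addr0; first by rewrite mxE !eqxx mul1r.
by move=> i' ne; rewrite mxE eqxx /= (negbTE ne) mul0r.
Qed.

Lemma sum_delta' (f : 'I_n -> k) i :
  \sum_i' f i' * (delta_mx 0 i : 'rV[k]_n) 0 i' = f i.
Proof. by rewrite -(sum_delta f i); apply: eq_bigr => i' _; rewrite mulrC. Qed.

Lemma Lm_sum x : Lm x = \sum_i x 0 i *: Lm (delta_mx 0 i).
Proof.
apply/matrixP => j t; rewrite summxE !mxE; apply: eq_bigr => i _.
by rewrite !mxE sum_delta.
Qed.

Lemma hmulv_delta i j :
  hmulv A (delta_mx 0 i) (delta_mx 0 j) = \row_t hmul A i j t.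
Proof.
rewrite hmulv_Rmu -rowE; apply/rowP => t; rewrite !mxE.
exact: (sum_delta (fun j' => hmul A i j' t)).
Qed.

Definition Mr (s : 'rV[k]_n) : 'M[k]_n := \matrix_(i, a) \sum_b hcop A i a b * s 0 b.
Definition ev (f v : 'rV[k]_n) : k := \sum_i v 0 i * f 0 i.

Lemma dmulE f s : dmul A f s = f *m (Mr s)^T.
Proof.
apply/rowP => i; rewrite !mxE; apply: eq_bigr => a _; rewrite !mxE big_distrr.
by apply: eq_bigr => b _ /=; ring.
Qed.

Lemma ev_mx f v : (v *m f^T) 0 0 = ev f v.
Proof. by rewrite mxE; apply: eq_bigr => i _; rewrite mxE. Qed.

Lemma ev_dmul f s v : ev (dmul A f s) v = ev f (v *m Mr s).
Proof. by rewrite dmulE -!ev_mx trmx_mul trmxK mulmxA. Qed.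

Lemma sum4_perm (F : 'I_n -> 'I_n -> 'I_n -> 'I_n -> k) :
  \sum_p \sum_r \sum_i \sum_j F p r i j = \sum_i \sum_j \sum_p \sum_r F p r i j.
Proof.
under eq_bigr => p _ do rewrite exchange_big.
rewrite exchange_big; apply: eq_bigr => i _.
under eq_bigr => p _ do rewrite exchange_big.
by rewrite exchange_big.
Qed.

Section Grouplike.
Variable s : 'rV[k]_n.
Hypothesis Hs : grouplike_dual A s.

Lemma KM i j a : \sum_l hmul A i j l * Mr s l a =
  \sum_p \sum_r Mr s i p * Mr s j r * hmul A p r a.
Proof.
case: Hs => Hs1 _.
transitivity (\sum_b s 0 b * \sum_l hmul A i j l * hcop A l a b).
  rewrite (eq_bigr (fun l => \sum_b s 0 b * (hmul A i j l * hcop A l a b))).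
    by rewrite exchange_big; apply: eq_bigr => b _; rewrite big_distrr.
  by move=> l _; rewrite mxE big_distrr; apply: eq_bigr => b _ /=; ring.
under eq_bigr => b _ do rewrite (hcop_mul HA).
transitivity (\sum_p \sum_q \sum_r \sum_s' hcop A i p q * hcop A j r s' * hmul A p r a * (s 0 q * s 0 s')).
  rewrite (eq_bigr (fun b => \sum_p \sum_q \sum_r \sum_s' s 0 b * (hcop A i p q * hcop A j r s' * hmul A p r a * hmul A q s' b))); last first.
    move=> b _; rewrite big_distrr; apply: eq_bigr => p _.
    rewrite big_distrr; apply: eq_bigr => q _.
    rewrite big_distrr; apply: eq_bigr => r _.
    by rewrite big_distrr; apply: eq_bigr => s' _.
  rewrite exchange_big; apply: eq_bigr => p _.
  rewrite exchange_big; apply: eq_bigr => q _.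
  rewrite exchange_big; apply: eq_bigr => r _.
  rewrite exchange_big; apply: eq_bigr => s' _.
  rewrite -Hs1 big_distrr; apply: eq_bigr => b _ /=; ring.
apply: eq_bigr => p _; rewrite exchange_big; apply: eq_bigr => r _.
rewrite !mxE big_distrl big_distrl; apply: eq_bigr => q _ /=.
rewrite big_distrr big_distrl; apply: eq_bigr => s' _ /=; ring.
Qed.


Lemma ev_mul x y : ev s (hmulv A x y) = ev s x * ev s y.
Proof.
case: Hs => Hs1 _.
rewrite /ev big_distrlr /=.
rewrite (eq_bigr (fun t => \sum_i \sum_j x 0 i * y 0 j * (hmul A i j t * s 0 t))); last first.
  move=> t _; rewrite mxE big_distrl; apply: eq_bigr => i _.
  by rewrite big_distrl; apply: eq_bigr => j _ /=; ring.
rewrite exchange_big; apply: eq_bigr => i _; rewrite exchange_big.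
apply: eq_bigr => j _; rewrite -big_distrr Hs1 /=; ring.
Qed.

Lemma ev_one : ev s (honev A) = 1.
Proof.
case: Hs => _ <-; apply: eq_bigr => i _; by rewrite mxE.
Qed.

Lemma hone_Mr a : \sum_l hone A l * Mr s l a = hone A a.
Proof.
case: Hs => _ Hs2.
transitivity (\sum_b (\sum_l hone A l * hcop A l a b) * s 0 b).
  rewrite (eq_bigr (fun l => \sum_b hone A l * hcop A l a b * s 0 b)).
    by rewrite exchange_big; apply: eq_bigr => b _; rewrite big_distrl.
  by move=> l _; rewrite mxE big_distrr; apply: eq_bigr => b _ /=; rewrite mulrA.
under eq_bigr => b _ do rewrite (hcop_one HA).
by rewrite -[RHS]mulr1 -Hs2 big_distrr; apply: eq_bigr => b _ /=; rewrite mulrA.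
Qed.

Lemma Rm_mul x y : hmulv A (x *m Mr s) (y *m Mr s) = (hmulv A x y) *m Mr s.
Proof.
apply/rowP => a; rewrite [LHS]mxE [RHS]mxE.
transitivity (\sum_i \sum_j x 0 i * y 0 j * \sum_l hmul A i j l * Mr s l a); last first.
  rewrite [RHS](eq_bigr (fun l => \sum_i \sum_j x 0 i * y 0 j * (hmul A i j l * Mr s l a))); last first.
    move=> l _; rewrite mxE big_distrl; apply: eq_bigr => i _.
    by rewrite big_distrl; apply: eq_bigr => j _ /=; ring.
  symmetry; rewrite exchange_big; apply: eq_bigr => i _; rewrite exchange_big.
  by apply: eq_bigr => j _; rewrite big_distrr.
under [RHS]eq_bigr => i _ do under eq_bigr => j _ do rewrite KM big_distrr.
under [RHS]eq_bigr => i _ do under eq_bigr => j _ do under eq_bigr => p _ do rewrite big_distrr.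
rewrite (eq_bigr (fun p => \sum_r \sum_i \sum_j x 0 i * y 0 j * (Mr s i p * Mr s j r * hmul A p r a))); last first.
  move=> p _; apply: eq_bigr => r _; rewrite !mxE big_distrlr /= big_distrl.
  apply: eq_bigr => i _; rewrite big_distrl; apply: eq_bigr => j _ /=; ring.
exact: sum4_perm.
Qed.


Definition santi : 'rV[k]_n := \row_l \sum_r hant A l r * s 0 r.

Lemma anti p : \sum_q \sum_l hcop A p q l * santi 0 q * s 0 l = hcou A p.
Proof.
case: Hs => Hs1 Hs2.
transitivity (\sum_t (\sum_q \sum_l hcop A p q l * (\sum_r hant A q r * hmul A r l t)) * s 0 t); last first.
  under eq_bigr => t _ do rewrite (hant_l HA) -mulrA.
  by rewrite -big_distrr /= Hs2 mulr1.
transitivity (\sum_q \sum_l \sum_r \sum_t hcop A p q l * hant A q r * (hmul A r l t * s 0 t)).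
  apply: eq_bigr => q _; apply: eq_bigr => l _.
  rewrite mxE big_distrr big_distrl; apply: eq_bigr => r _ /=.
  rewrite (_ : hcop A p q l * (hant A q r * s 0 r) * s 0 l = hcop A p q l * hant A q r * (s 0 r * s 0 l)); last by ring.
  rewrite -Hs1 big_distrr; apply: eq_bigr => t _ /=; ring.
symmetry.
under eq_bigr => t _ do rewrite big_distrl.
rewrite exchange_big; apply: eq_bigr => q _.
under eq_bigr => t _ do rewrite big_distrl.
rewrite exchange_big; apply: eq_bigr => l _.
under eq_bigr => t _ do rewrite big_distrr big_distrl.
rewrite exchange_big; apply: eq_bigr => r _.
by apply: eq_bigr => t _ /=; ring.
Qed.

Lemma Mr_inv : Mr s *m Mr santi = 1%:M.
Proof.
apply/matrixP => i j; rewrite !mxE.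
transitivity (\sum_l \sum_q s 0 l * santi 0 q * \sum_p hcop A i p l * hcop A p j q).
  rewrite (eq_bigr (fun p => \sum_l \sum_q s 0 l * santi 0 q * (hcop A i p l * hcop A p j q))).
    rewrite exchange_big; apply: eq_bigr => l _.
    rewrite exchange_big; apply: eq_bigr => q _.
    by rewrite big_distrr.
  move=> p _; rewrite !mxE big_distrlr; apply: eq_bigr => l _; apply: eq_bigr => q _ /=; ring.
under eq_bigr => l _ do under eq_bigr => q _ do rewrite (hcopA HA) big_distrr.
rewrite -(hcou_r HA i j).
transitivity (\sum_p hcop A i j p * \sum_q \sum_l hcop A p q l * santi 0 q * s 0 l); last first.
  by apply: eq_bigr => p _; rewrite anti.
under eq_bigr => l _ do rewrite exchange_big.
rewrite exchange_big; apply: eq_bigr => p _.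
rewrite exchange_big big_distrr; apply: eq_bigr => q _ /=.
rewrite big_distrr; apply: eq_bigr => l _ /=; ring.
Qed.

Lemma Mr_unit : Mr s \in unitmx.
Proof. by case: (mulmx1_unit Mr_inv). Qed.
End Grouplike.

Lemma grouplike_dmul g s : grouplike_dual A g -> grouplike_dual A s ->
  grouplike_dual A (dmul A g s).
Proof.
move=> [Hg1 Hg2] Hs; rewrite dmulE; split.
  move=> i j.
  transitivity (\sum_a g 0 a * \sum_l hmul A i j l * Mr s l a).
    rewrite (eq_bigr (fun l => \sum_a g 0 a * (hmul A i j l * Mr s l a))).
      by rewrite exchange_big; apply: eq_bigr => a _; rewrite big_distrr.
    by move=> l _; rewrite !mxE big_distrr; apply: eq_bigr => a _ /=; rewrite mxE; ring.
  under eq_bigr => a _ do rewrite (KM Hs) big_distrr.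
  under eq_bigr => a _ do under eq_bigr => p _ do rewrite big_distrr.
  transitivity (\sum_p \sum_r Mr s i p * Mr s j r * (g 0 p * g 0 r)).
    rewrite exchange_big; apply: eq_bigr => p _.
    rewrite exchange_big; apply: eq_bigr => r _.
    rewrite -Hg1 big_distrr; apply: eq_bigr => a _ /=; ring.
  rewrite !mxE big_distrlr; apply: eq_bigr => p _; apply: eq_bigr => r _.
  by rewrite /= !mxE; ring.
transitivity (\sum_a g 0 a * \sum_l hone A l * Mr s l a).
  rewrite (eq_bigr (fun l => \sum_a g 0 a * (hone A l * Mr s l a))).
    by rewrite exchange_big; apply: eq_bigr => a _; rewrite big_distrr.
  by move=> l _; rewrite !mxE big_distrr; apply: eq_bigr => a _ /=; rewrite mxE; ring.
rewrite -Hg2; apply: eq_bigr => a _; rewrite (hone_Mr Hs); ring.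
Qed.

Lemma grouplike_deps : grouplike_dual A (deps A).
Proof.
split; last by rewrite -(hcou_one HA); apply: eq_bigr => l _; rewrite mxE.
move=> i j; rewrite !mxE -(hcou_mul HA); apply: eq_bigr => l _; by rewrite mxE.
Qed.

Lemma grouplike_dpow s j : grouplike_dual A s -> grouplike_dual A (dpow A s j).
Proof.
move=> Hs; elim: j => [|j IH]; first exact: grouplike_deps.
exact: grouplike_dmul.
Qed.

End Basics.

Section Span.
Variables (k : fieldType) (n : nat) (A : hopf_str k n).
Hypothesis HA : is_hopf A.
Variable s : 'rV[k]_n.
Hypothesis Hs : grouplike_dual A s.

Definition Wm (i : nat) : 'M[k]_(i, n) := \matrix_(j < i) dpow A s j.

Fact dW_proof : exists d, (\rank (Wm d.+1) <= d)%N.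
Proof. by exists n; rewrite rank_leq_col. Qed.

Definition dd := ex_minn dW_proof.
Local Notation W := (Wm dd).

Lemma Wstab : (Wm dd.+1 <= W)%MS.
Proof.
rewrite /dd; case: ex_minnP => d Hd Hmin.
have sub : (Wm d <= Wm d.+1)%MS.
  apply/row_subP => j; apply: (eq_row_sub (widen_ord (leqnSn d) j)).
  by rewrite !rowK.
have rk : (d <= \rank (Wm d))%N.
  case: d Hd Hmin sub => [|d'] // Hd Hmin sub.
  rewrite ltnNge; apply/negP => /Hmin; by rewrite ltnn.
rewrite -(geq_leqif (mxrank_leqif_sup sub)).
exact: leq_trans Hd rk.
Qed.

Lemma dpowS j : dpow A s j.+1 = dpow A s j *m (Mr A s)^T.
Proof. by rewrite -dmulE. Qed.

Lemma dpow_sub j : (dpow A s j <= W)%MS.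
Proof.
have WD : (W *m (Mr A s)^T <= W)%MS.
  apply/row_subP => j'; rewrite row_mul rowK -dpowS.
  apply: submx_trans Wstab.
  by apply: (eq_row_sub (@Ordinal dd.+1 j'.+1 (ltn_ord j'))); rewrite rowK.
elim: j => [|j IH].
  apply: submx_trans Wstab.
  by apply: (eq_row_sub (@Ordinal dd.+1 0 (ltn0Sn _))); rewrite rowK.
rewrite dpowS; apply: submx_trans WD; exact: submxMr.
Qed.

Definition Ik := kermx W^T.

Lemma IkP (v : 'rV[k]_n) : (v <= Ik)%MS <-> forall j, ev (dpow A s j) v = 0.
Proof.
split.
  move/sub_kermxP => Hv j; case/submxP: (dpow_sub j) => w ->.
  by rewrite -ev_mx trmx_mul mulmxA Hv mul0mx mxE.
move=> Hv; apply/sub_kermxP; apply/rowP => j.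
rewrite [RHS]mxE -(Hv j) mxE /ev.
by apply: eq_bigr => i _; rewrite !mxE.
Qed.

Lemma span_ok : (forall v : 'rV[k]_n, (v <= Ik)%MS -> v = 0) -> forall f, in_span_pow A s f.
Proof.
move=> H0 f.
have K0 : kermx W^T = 0.
  by apply/row_matrixP => i; rewrite row0; apply: H0; exact: row_sub.
have full : row_full W.
  by rewrite /row_full -mxrank_tr; move/eqP: K0; rewrite kermx_eq0.
case/submxP: (submx_full f full) => w ->.
exists dd, (fun j => w 0 j); rewrite mulmx_sum_row.
by apply: eq_bigr => j _; rewrite rowK.
Qed.

Lemma Ik_left (x v : 'rV[k]_n) : (v <= Ik)%MS -> (hmulv A x v <= Ik)%MS.
Proof.
move/IkP => Hv; apply/IkP => j.
by rewrite (ev_mul (grouplike_dpow HA j Hs)) Hv mulr0.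
Qed.

Lemma Ik_right (x v : 'rV[k]_n) : (v <= Ik)%MS -> (hmulv A v x <= Ik)%MS.
Proof.
move/IkP => Hv; apply/IkP => j.
by rewrite (ev_mul (grouplike_dpow HA j Hs)) Hv mul0r.
Qed.

Lemma Ik_R (v : 'rV[k]_n) : (v <= Ik)%MS -> (v *m Mr A s <= Ik)%MS.
Proof.
move/IkP => Hv; apply/IkP => j.
by rewrite -ev_dmul -(Hv j.+1).
Qed.

End Span.

Lemma submxB_ (k : fieldType) m1 m2 n (X Y : 'M[k]_(m1, n)) (C : 'M[k]_(m2, n)) :
  (X <= C)%MS -> (Y <= C)%MS -> (X - Y <= C)%MS.
Proof. by move=> hX hY; rewrite addmx_sub // -scaleN1r scalemx_sub. Qed.

Section Semisimple.
Variables (k : fieldType) (n : nat) (A : hopf_str k n).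
Hypothesis HA : is_hopf A.
Hypothesis Hss : semisimple A.

Lemma hmulvDr x a b : hmulv A x (a + b) = hmulv A x a + hmulv A x b.
Proof. by rewrite !hmulv_Lm mulmxDl. Qed.

Lemma ss_rid (L : 'M[k]_n) : left_ideal A L ->
  exists2 a : 'rV[k]_n, (a <= L)%MS & forall x, (x <= L)%MS -> hmulv A x a = x.
Proof.
move=> HL; case: (Hss HL) => J [HJ HLJ H1].
have : (honev A <= L + J)%MS := submx_trans (submx1 _) H1.
case/sub_addsmxP => [[u1 u2]] /= Hone.
exists (u1 *m L); first exact: submxMl.
move=> x Hx.
have e : x = hmulv A x (u1 *m L) + hmulv A x (u2 *m J).
  by rewrite -hmulvDr -Hone hmulv1.
have h1 : (hmulv A x (u2 *m J) <= J)%MS by apply: HJ; exact: submxMl.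
have h2 : (hmulv A x (u2 *m J) <= L)%MS.
  have -> : hmulv A x (u2 *m J) = x - hmulv A x (u1 *m L).
    by rewrite {2}e addrC addKr.
  by apply: submxB_ => //; apply: HL; exact: submxMl.
have : (hmulv A x (u2 *m J) <= (0 : 'M_n))%MS.
  by apply: submx_trans HLJ; rewrite sub_capmx h1 h2.
rewrite submx0 => /eqP h0.
by rewrite {2}e h0 addr0.
Qed.

Lemma ss_nil (L : 'M[k]_n) : left_ideal A L ->
  (forall x y : 'rV[k]_n, (x <= L)%MS -> (y <= L)%MS -> hmulv A x y = 0) ->
  forall x : 'rV[k]_n, (x <= L)%MS -> x = 0.
Proof.
move=> HL Hn x Hx; case: (ss_rid HL) => a Ha Hr.
by rewrite -(Hr x Hx) Hn.
Qed.

Lemma GenP (v d : 'rV[k]_n) : (v <= Rmu A d)%MS <-> exists w, v = hmulv A w d.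
Proof.
split; first by case/submxP => w ->; exists w; rewrite hmulv_Rmu.
by case=> w ->; rewrite hmulv_Rmu submxMl.
Qed.

Lemma Gen_left d : left_ideal A (Rmu A d).
Proof.
move=> x v /GenP [w ->]; apply/GenP; exists (hmulv A x w).
by rewrite hmulv_assoc.
Qed.

Lemma Gen_self d : (d <= Rmu A d)%MS.
Proof. by apply/GenP; exists (honev A); rewrite hmul1v. Qed.

End Semisimple.

Section ItoIII.
Variables (k : fieldType) (n : nat) (A : hopf_str k n).
Hypothesis HA : is_hopf A.
Hypothesis Hss : semisimple A.

Lemma rep1_grouplike (r : 'I_n -> 'M[k]_1) : rep_of A r ->
  grouplike_dual A (\row_l r l 0 0).
Proof.
case=> Hr1 Hr2; split.
  move=> i j; have H := congr1 (fun M : 'M_1 => M 0 0) (Hr1 i j); simpl in H.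
  rewrite mxE big_ord1 summxE in H.
  rewrite !mxE H; apply: eq_bigr => l _; by rewrite !mxE.
have H : \sum_l (hone A l *: r l) 0 0 = 1 by rewrite -summxE Hr2 mxE.
rewrite -H.
by apply: eq_bigr => l _; rewrite !mxE.
Qed.

Lemma hmulv0 x : hmulv A x 0 = 0.
Proof. by rewrite hmulv_Lm mul0mx. Qed.

Lemma hmulvBr x a b : hmulv A x (a - b) = hmulv A x a - hmulv A x b.
Proof. by rewrite !hmulv_Lm mulmxBl. Qed.

Lemma ev_scale (f v : 'rV[k]_n) (c : k) : ev f (c *: v) = c * ev f v.
Proof. by rewrite /ev big_distrr; apply: eq_bigr => i _; rewrite mxE /=; ring. Qed.

Lemma ev_deps_one : ev (deps A) (honev A) = 1.
Proof. by rewrite -(hcou_one HA); apply: eq_bigr => i _; rewrite !mxE. Qed.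

Lemma i_to_iii :
  (exists r : 'I_n -> 'M[k]_1, rep_of A r /\ faithful_char A r) ->
  exists s, grouplike_dual A s /\ forall f, in_span_pow A s f.
Proof.
move=> [r [Hr Hf]].
set s := \row_l r l 0 0.
have Hs : grouplike_dual A s := rep1_grouplike Hr.
exists s; split => //.
apply: span_ok => v Hv.
have HI : left_ideal A (Ik A s) by move=> x u; exact: Ik_left.
case: (ss_rid HA Hss HI) => e He Hre.
have RI : (Ik A s *m Mr A s <= Ik A s)%MS.
  by apply/row_subP => i; rewrite row_mul; apply: Ik_R; exact: row_sub.
have IR : (Ik A s <= Ik A s *m Mr A s)%MS.
  rewrite -(geq_leqif (mxrank_leqif_sup RI)) mxrankMfree //.
  by rewrite row_free_unit (Mr_unit HA Hs).
have surj : forall x : 'rV[k]_n, (x <= Ik A s)%MS ->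
    exists2 y, (y <= Ik A s)%MS & x = y *m Mr A s.
  move=> x Hx; case/submxP: (submx_trans Hx IR) => w ->.
  by exists (w *m Ik A s); [exact: submxMl | rewrite mulmxA].
have Rid : forall x : 'rV[k]_n, (x <= Ik A s)%MS -> hmulv A x (e *m Mr A s) = x.
  move=> x /surj [y Hy ->]; by rewrite (Rm_mul HA Hs) Hre.
have eIk : (e *m Mr A s <= Ik A s)%MS by apply: Ik_R.
have Dz : forall x : 'rV[k]_n, (x <= Ik A s)%MS -> hmulv A x (e *m Mr A s - e) = 0.
  by move=> x Hx; rewrite hmulvBr Rid // Hre // subrr.
have dI : (e *m Mr A s - e <= Ik A s)%MS by apply: submxB_.
have d0 : e *m Mr A s - e = 0.
  apply: (ss_nil HA Hss (@Gen_left _ _ _ HA (e *m Mr A s - e)) _ (Gen_self HA _)).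
  move=> x y Hx /GenP [w ->].
  have xI : (x <= Ik A s)%MS.
    by case/GenP: Hx => w' ->; apply: Ik_left.
  by rewrite -hmulv_assoc // Dz //; apply: Ik_right.
have eR : e *m Mr A s = e by apply/eqP; rewrite -subr_eq0 d0.
have eL : in_LKer A r e.
  move=> u j a; rewrite (ord1 a).
  transitivity ((e *m Mr A s) 0 j * u 0 0); last by rewrite eR.
  rewrite [X in _ = X * _]mxE big_distrl; apply: eq_bigr => i _ /=.
  rewrite -mulrA; congr (_ * _).
  rewrite mxE big_distrl; apply: eq_bigr => l _ /=.
  by rewrite [s 0 l]mxE [(r l *m u) 0 0]mxE big_ord1; ring.
case/Hf: eL => c ec.
have c0 : c = 0.
  have := (proj1 (IkP A s e) He 0%N).
  by rewrite ec ev_scale /= ev_deps_one mulr1.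
by rewrite -(Hre v Hv) ec c0 scale0r hmulv0.
Qed.

End ItoIII.

Lemma eq1x1 (k : fieldType) (M N : 'M[k]_1) : M 0 0 = N 0 0 -> M = N.
Proof. by move=> h; apply/matrixP => a b; rewrite (ord1 a) (ord1 b). Qed.

Section FromIII.
Variables (k : fieldType) (n : nat) (A : hopf_str k n).
Hypothesis HA : is_hopf A.

Lemma ev_sumZ m (c : 'I_m -> k) (g : 'I_m -> 'rV[k]_n) (v : 'rV[k]_n) :
  ev (\sum_j c j *: g j) v = \sum_j c j * ev (g j) v.
Proof.
rewrite /ev; under eq_bigr => i _ do rewrite summxE big_distrr.
rewrite exchange_big; apply: eq_bigr => j _ /=.
rewrite big_distrr; apply: eq_bigr => i _ /=; rewrite mxE; ring.
Qed.

Lemma rep1 (g : 'rV[k]_n) : grouplike_dual A g ->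
  rep_of A (fun l => (g 0 l)%:M : 'M[k]_1).
Proof.
case=> Hg1 Hg2; split.
  move=> i j; apply: eq1x1; rewrite summxE mxE big_ord1 !mxE /= !mulr1n -Hg1.
  by apply: eq_bigr => l _; rewrite !mxE mulr1n.
apply: eq1x1; rewrite summxE !mxE /= -Hg2.
by apply: eq_bigr => l _; rewrite !mxE mulr1n.
Qed.

Lemma charv1 (g : 'rV[k]_n) : charv (fun l => (g 0 l)%:M : 'M[k]_1) = g.
Proof. by apply/rowP => i; rewrite !mxE mxtrace_scalar. Qed.

Lemma irr1 (g : 'rV[k]_n) : grouplike_dual A g ->
  irr_rep A (fun l => (g 0 l)%:M : 'M[k]_1).
Proof.
move=> Hg; split => //; first exact: rep1.
move=> U _; case: (eqVneq U 0) => [->|nz]; first by left.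
right; rewrite /row_full eqn_leq rank_leq_col /=.
by rewrite lt0n mxrank_eq0.
Qed.

Lemma ev_dpow_const (s h : 'rV[k]_n) : h *m Mr A s = h ->
  forall j, ev (dpow A s j) h = ev (deps A) h.
Proof.
move=> Hh; elim => [//|j IH].
change (ev (dmul A (dpow A s j) s) h = ev (deps A) h).
by rewrite ev_dmul Hh.
Qed.


Lemma LKer_key (s h : 'rV[k]_n) (u : 'cV[k]_1) j a :
  \sum_i h 0 i * (\sum_l hcop A i j l * (((s 0 l)%:M : 'M[k]_1) *m u) a 0)
  = (h *m Mr A s) 0 j * u 0 0.
Proof.
rewrite (ord1 a) [X in _ = X * _]mxE big_distrl; apply: eq_bigr => i _ /=.
rewrite -mulrA; congr (_ * _).
rewrite mxE big_distrl; apply: eq_bigr => l _ /=.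
by rewrite mul_scalar_mx mxE; ring.
Qed.

Lemma LKer1 (s h : 'rV[k]_n) :
  in_LKer A (fun l => (s 0 l)%:M : 'M[k]_1) h <-> h *m Mr A s = h.
Proof.
split.
  move=> H; apply/rowP => j; have := H 1%:M j 0.
  by rewrite LKer_key !mxE eqxx !mulr1n !mulr1.
by move=> Hm u j a; rewrite LKer_key Hm (ord1 a).
Qed.

Lemma honev_Mr (s : 'rV[k]_n) : grouplike_dual A s -> honev A *m Mr A s = honev A.
Proof.
move=> Hs; apply/rowP => j; rewrite !mxE -(hone_Mr HA Hs j).
by apply: eq_bigr => l _; rewrite mxE.
Qed.

Lemma iii_to_i :
  (exists s, grouplike_dual A s /\ forall f, in_span_pow A s f) ->
  exists r : 'I_n -> 'M[k]_1, rep_of A r /\ faithful_char A r.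
Proof.
move=> [s [Hs Hall]].
exists (fun l => (s 0 l)%:M); split; first exact: rep1.
move=> h; rewrite LKer1; split; last first.
  by move=> [c ->]; rewrite -scalemxAl honev_Mr.
move=> Hm; exists (ev (deps A) h); apply/rowP => t.
case: (Hall (delta_mx 0 t)) => m [cc Hd].
have e1 : ev (delta_mx 0 t) h = h 0 t by exact: (sum_delta' (fun i => h 0 i)).
have e2 : ev (delta_mx 0 t) (honev A) = hone A t.
  rewrite -(sum_delta' (fun i => hone A i)); apply: eq_bigr => i _; by rewrite mxE.
have E1 : h 0 t = \sum_j cc j * ev (deps A) h.
  by rewrite -e1 Hd ev_sumZ; apply: eq_bigr => j _; rewrite ev_dpow_const.
have E2 : hone A t = \sum_j cc j.
  rewrite -e2 Hd ev_sumZ; apply: eq_bigr => j _.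
  by rewrite (ev_one (grouplike_dpow HA j Hs)) mulr1.
by rewrite E1 !mxE E2 -big_distrl /= mulrC.
Qed.

Lemma iii_to_ii :
  (exists s, grouplike_dual A s /\ forall f, in_span_pow A s f) ->
  exists s, grouplike_dual A s /\ forall f, inRH A f <-> in_span_pow A s f.
Proof.
move=> [s [Hs Hall]]; exists s; split => // f; split => // _.
case: (Hall f) => m [c Hf].
exists m, c, (fun _ => 1%N), (fun j l => (dpow A s j 0 l)%:M); split.
  by move=> j; apply: irr1; exact: grouplike_dpow.
by rewrite Hf; apply: eq_bigr => j _; rewrite charv1.
Qed.

End FromIII.

Lemma tr_idem (k : fieldType) m (P : 'M[k]_m) : P *m P = P -> \tr P = (\rank P)%:R.
Proof.
move=> HP.
have PCR : P = col_base P *m row_base P by rewrite mulmx_base.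
have RC : row_base P *m col_base P = 1%:M.
  apply: (row_free_inj (row_base_free P)); apply: (row_full_inj (col_base_full P)).
  by rewrite /= mul1mx mulmxA mulmxA -PCR -mulmxA -PCR.
by rewrite {1}PCR mxtrace_mulC RC mxtrace1.
Qed.

Section Rep.
Variables (k : fieldType) (n : nat) (A : hopf_str k n).
Hypothesis HA : is_hopf A.
Variable L : 'M[k]_n.
Hypothesis HL : left_ideal A L.

Local Notation B := (row_base L).
Definition Mm (x : 'rV[k]_n) : 'M[k]_(\rank L) := B *m Lm A x *m pinvmx B.

Lemma BL x : (B *m Lm A x <= B)%MS.
Proof.
apply/row_subP => p; rewrite row_mul -hmulv_Lm eq_row_base.
apply: HL; rewrite -(eq_row_base L); exact: row_sub.
Qed.

Lemma MmB x : Mm x *m B = B *m Lm A x.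
Proof. exact: mulmxKpV (BL x). Qed.

Lemma Mm_inj (X Y : 'M[k]_(\rank L)) : X *m B = Y *m B -> X = Y.
Proof. exact: (row_free_inj (row_base_free L)). Qed.

Lemma Mm_mul x y : Mm (hmulv A x y) = Mm y *m Mm x.
Proof.
apply: Mm_inj; rewrite MmB -mulmxA MmB mulmxA MmB -mulmxA.
by rewrite (Lm_mul HA).
Qed.

Lemma Mm_one : Mm (honev A) = 1%:M.
Proof. by apply: Mm_inj; rewrite MmB (Lm_one HA) mul1mx mulmx1. Qed.

Lemma Mm_sum x : Mm x = \sum_i x 0 i *: Mm (delta_mx 0 i).
Proof.
apply: Mm_inj; rewrite MmB mulmx_suml {1}Lm_sum mulmx_sumr.
by apply: eq_bigr => i _; rewrite -scalemxAl MmB scalemxAr.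
Qed.

Definition rr (i : 'I_n) : 'M[k]_(\rank L) := (Mm (delta_mx 0 i))^T.

Lemma rr_rep : rep_of A rr.
Proof.
split.
  move=> i j; rewrite /rr -trmx_mul -Mm_mul hmulv_delta Mm_sum.
  apply/matrixP => a b; rewrite !mxE !summxE; apply: eq_bigr => l _.
  by rewrite !mxE.
rewrite -[1%:M]trmx1 -Mm_one Mm_sum.
apply/matrixP => a b; rewrite !mxE !summxE; apply: eq_bigr => l _.
by rewrite !mxE.
Qed.

Lemma UMm (U : 'M[k]_(\rank L)) : (forall i, (U *m (rr i)^T <= U)%MS) ->
  forall x, (U *m Mm x <= U)%MS.
Proof.
move=> HU x; rewrite Mm_sum mulmx_sumr; apply: summx_sub => i _.
by rewrite -scalemxAr scalemx_sub //; have := HU i; rewrite /rr trmxK.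
Qed.

Hypothesis Hmin : forall U : 'M[k]_n, left_ideal A U -> (U <= L)%MS ->
  \rank U = 0%N \/ \rank U = \rank L.
Hypothesis Hpos : (0 < \rank L)%N.

Lemma rr_irr : irr_rep A rr.
Proof.
split; [exact: rr_rep | exact: Hpos |].
move=> U HU.
have HUI : left_ideal A <<U *m B>>%MS.
  move=> x v; rewrite !genmxE => /submxP [w ->].
  rewrite hmulv_Lm -mulmxA -mulmxA -MmB mulmxA mulmxA; apply: submxMr.
  rewrite -mulmxA; exact: mulmx_sub (UMm HU x).
have HUL : (<<U *m B>> <= L)%MS by rewrite genmxE -(eq_row_base L) submxMl.
case: (Hmin HUI HUL); rewrite genmxE mxrankMfree ?row_base_free //.
  by move/eqP; rewrite mxrank_eq0 => /eqP ->; left.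
by move=> h; right; rewrite /row_full h.
Qed.

Lemma ev_charv a : ev (charv rr) a = \tr (Mm a).
Proof.
rewrite [Mm a]Mm_sum raddf_sum /ev; apply: eq_bigr => i _.
by rewrite /= mxtraceZ mxE /rr mxtrace_tr.
Qed.

Lemma charv_nz (a : 'rV[k]_n) : [pchar k] =i pred0 -> (a <= L)%MS -> a != 0 ->
  (forall x, (x <= L)%MS -> hmulv A x a = x) -> ev (charv rr) a != 0.
Proof.
move=> Hc aL anz Hr; rewrite ev_charv.
have idem : Mm a *m Mm a = Mm a by rewrite -Mm_mul Hr.
rewrite tr_idem //; move/pcharf0P: Hc => ->; rewrite mxrank_eq0.
apply/eqP => M0; move/eqP: anz; apply.
rewrite -(Hr a aL); have aL2 := aL; rewrite -(eq_row_base L) in aL2; case/submxP: aL2 => w aw.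
by rewrite hmulv_Lm {1}aw -mulmxA -MmB M0 mul0mx mulmx0.
Qed.

End Rep.

Require Stdlib.Logic.Classical_Prop.

Lemma exists_min (k : fieldType) n (A : hopf_str k n) (L0 : 'M[k]_n) :
  left_ideal A L0 -> (0 < \rank L0)%N ->
  exists L : 'M[k]_n, [/\ left_ideal A L, (L <= L0)%MS, (0 < \rank L)%N &
    forall U : 'M[k]_n, left_ideal A U -> (U <= L)%MS ->
      \rank U = 0%N \/ \rank U = \rank L].
Proof.
move: {2}(\rank L0) (leqnn (\rank L0)) => N.
elim: N L0 => [|N IH] L0 hN HL0 Hp.
  by rewrite leqn0 in hN; rewrite (eqP hN) in Hp.
case: (Classical_Prop.classic (exists U : 'M[k]_n, [/\ left_ideal A U, (U <= L0)%MS,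
          (0 < \rank U)%N & (\rank U < \rank L0)%N])).
  case=> U [HU UL Up Ult].
  have hU : (\rank U <= N)%N by rewrite -ltnS; exact: leq_trans Ult hN.
  case: (IH U hU HU Up) => L [a b c d].
  by exists L; split => //; exact: submx_trans b UL.
move=> Hno; exists L0; split => // U HU UL.
case: (posnP (\rank U)) => [->|pos]; [by left | right].
apply/eqP; rewrite eqn_leq mxrankS //= leqNgt; apply/negP => lt.
by apply: Hno; exists U; split.
Qed.

Lemma ii_to_iii (k : fieldType) n (A : hopf_str k n) :
  [pchar k] =i pred0 -> is_hopf A -> semisimple A ->
  (exists s, grouplike_dual A s /\ forall f, inRH A f <-> in_span_pow A s f) ->
  exists s, grouplike_dual A s /\ forall f, in_span_pow A s f.
Proof.
move=> Hc HA Hss [s [Hs Heq]]; exists s; split => //.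
apply: span_ok => v Hv; apply/eqP; apply/negPn/negP => vnz.
have HL0 : left_ideal A (Rmu A v) := @Gen_left _ _ _ HA v.
have L0I : (Rmu A v <= Ik A s)%MS.
  apply/row_subP => i; have := row_sub i (Rmu A v); case/GenP => w ->.
  exact: Ik_left.
have Hp : (0 < \rank (Rmu A v))%N.
  apply: leq_trans (mxrankS (Gen_self HA v)).
  by rewrite lt0n mxrank_eq0.
case: (exists_min HL0 Hp) => L [HL LL0 Lp Lmin].
case: (ss_rid HA Hss HL) => a aL Hra.
have anz : a != 0.
  apply/eqP => a0; move: Lp; rewrite lt0n mxrank_eq0; apply/negP; rewrite negbK.
  apply/eqP/row_matrixP => i; rewrite row0 -(Hra _ (row_sub i L)) a0.
  exact: hmulv0.
have nz := charv_nz HA HL Hc aL anz Hra.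
have inR : inRH A (charv (rr A L)).
  exists 1%N, (fun _ => 1), (fun _ => \rank L), (fun _ => rr A L); split.
    by move=> _; exact: rr_irr.
  by rewrite big_ord1 scale1r.
case: (proj1 (Heq _) inR) => m [c Hf].
move: nz; rewrite Hf ev_sumZ big1 ?eqxx //.
move=> j _; have aI : (a <= Ik A s)%MS by apply: submx_trans aL (submx_trans LL0 L0I).
by rewrite (proj1 (IkP A s a) aI j) mulr0.
Qed.

Unset Implicit Arguments.
Set Strict Implicit.

Theorem corollary3p9 (k : closedFieldType) (n : nat) (A : hopf_str k n) :
  [pchar k] =i pred0 -> is_hopf A -> semisimple A ->
  [<-> (exists r : 'I_n -> 'M[k]_1, rep_of A r /\ faithful_char A r);
       (exists s : 'rV[k]_n, grouplike_dual A s /\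
          forall f : 'rV[k]_n, inRH A f <-> in_span_pow A s f);
       (exists s : 'rV[k]_n, grouplike_dual A s /\
          forall f : 'rV[k]_n, in_span_pow A s f)].
Proof.
move=> Hc HA Hss; tfae.
- by move=> h; apply: (iii_to_ii HA); apply: (i_to_iii HA Hss).
- exact: (ii_to_iii Hc HA Hss).
- exact: (iii_to_i HA).
Qed.
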